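(* On the set of irreducible transition matrices on the finite set $S$ that are reversible with respect to $\pi$, efficiency dominance is a partial order: (a) every such $P$ efficiency-dominates itself; (b) if $P$ efficiency-dominates $Q$ and $Q$ efficiency-dominates $P$, then $P=Q$; (c) if $P$ efficiency-dominates $Q$ and $Q$ efficiency-dominates $R$, then $P$ efficiency-dominates $R$.
   Context: $S$ is a finite set, and $\pi$ is a probability distribution on $S$ with $\pi(x)>0$ for all $x$. A transition matrix $P$ is reversible with respect to $\pi$ if $\pi(x)P(x,y)=\pi(y)P(y,x)$ for all $x,y$; irreducible if every state can be reached from every other with positive probability in some number of steps. For a Markov chain $X_1,X_2,\dots$ with transition matrix $P$ and $X_1\sim\pi$, $v(f,P)=\lim_{N\to\infty}\frac1N\mathrm{Var}\big(\sum_{i=1}^N f(X_i)\big)$. $P$ efficiency-dominates $Q$ if $v(f,P)\le v(f,Q)$ for all $f:S\to\mathbb R$. *)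

(* Defs.v *)
From HB Require Import structures.
From mathcomp Require Import all_boot all_order all_algebra.
From mathcomp Require Import all_classical all_reals all_analysis.
Set Implicit Arguments. Unset Strict Implicit. Unset Printing Implicit Defensive.
Import Order.TTheory GRing.Theory Num.Theory.
Import numFieldNormedType.Exports.
Local Open Scope ring_scope.

Section MC.
Variables (R : realType) (S : finType).

Definition is_pos_distr (pi : S -> R) : Prop :=
  (forall x, 0 < pi x) /\ \sum_(x : S) pi x = 1.

Definition is_transition (P : S -> S -> R) : Prop :=
  (forall x y, 0 <= P x y) /\ (forall x, \sum_(y : S) P x y = 1).

Definition reversible (pi : S -> R) (P : S -> S -> R) : Prop :=
  forall x y, pi x * P x y = pi y * P y x.

Fixpoint nstep (P : S -> S -> R) (n : nat) : S -> S -> R :=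
  match n with
  | O => fun x y => if x == y then 1 else 0
  | m.+1 => fun x y => \sum_(z : S) nstep P m x z * P z y
  end.

Definition irreducible (P : S -> S -> R) : Prop :=
  forall x y, exists n : nat, 0 < nstep P n x y.

(* Probability that the chain X_1 ~ pi, transitions P, has path
   (X_1, ..., X_{n+1}) = (t 0, ..., t n). *)
Definition path_prob (pi : S -> R) (P : S -> S -> R) (n : nat)
    (t : {ffun 'I_n.+1 -> S}) : R :=
  pi (t ord0) * \prod_(i < n) P (t (widen_ord (leqnSn n) i)) (t (lift ord0 i)).

Definition path_sum (f : S -> R) (n : nat) (t : {ffun 'I_n.+1 -> S}) : R :=
  \sum_(i < n.+1) f (t i).

Definition mean_sum (pi : S -> R) (P : S -> S -> R) (f : S -> R) (n : nat) : R :=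
  \sum_(t : {ffun 'I_n.+1 -> S}) path_prob pi P t * path_sum f t.

Definition var_sum (pi : S -> R) (P : S -> S -> R) (f : S -> R) (n : nat) : R :=
  \sum_(t : {ffun 'I_n.+1 -> S})
     path_prob pi P t * (path_sum f t - mean_sum pi P f n) ^+ 2.

(* v(f,P) = lim_{N -> oo} Var(sum_{i=1}^N f(X_i)) / N  (indexed by N = n+1) *)
Definition asym_var (pi : S -> R) (f : S -> R) (P : S -> S -> R) : R :=
  limn (fun n : nat => var_sum pi P f n / n.+1%:R).

Definition eff_dominates (pi : S -> R) (P Q : S -> S -> R) : Prop :=
  forall f : S -> R, asym_var pi f P <= asym_var pi f Q.

Definition admissible (pi : S -> R) (P : S -> S -> R) : Prop :=
  is_transition P /\ irreducible P /\ reversible pi P.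

End MC.

(* Main.v *)
Require Import Defs.
From HB Require Import structures.
From mathcomp Require Import all_boot all_order all_algebra.
From mathcomp Require Import all_classical all_reals all_analysis.
From mathcomp Require Import ring lra.
Import Order.TTheory GRing.Theory Num.Theory.
Import numFieldNormedType.Exports.
Local Open Scope ring_scope.
Set Implicit Arguments. Unset Strict Implicit. Unset Printing Implicit Defensive.

Section Paths.
Variables (R : realType) (S : finType).

Definition restr n (t : {ffun 'I_n.+2 -> S}) : {ffun 'I_n.+1 -> S} :=
  [ffun i => t (widen_ord (leqnSn _) i)].
Definition ext n (t : {ffun 'I_n.+1 -> S}) (y : S) : {ffun 'I_n.+2 -> S} :=
  [ffun i : 'I_n.+2 => if (i < n.+1)%N then t (inord i) else y].

Lemma sum_paths_step n (G : {ffun 'I_n.+1 -> S} -> S -> R) :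
  \sum_(t : {ffun 'I_n.+2 -> S}) G (restr t) (t ord_max) =
  \sum_(t : {ffun 'I_n.+1 -> S}) \sum_(y : S) G t y.
Proof.
rewrite pair_big /=.
rewrite (reindex (fun p : {ffun 'I_n.+1 -> S} * S => ext p.1 p.2)) /=.
  apply: eq_bigr => [[t y]] _ /=; congr G.
    apply/ffunP => i; rewrite !ffunE /= ltn_ord; congr (t _); apply: val_inj.
    by rewrite /= inordK // ltnS ltnW.
  by rewrite ffunE /= ltnn.
exists (fun t => (restr t, t ord_max)) => [[t y]|t] _ /=.
  congr pair; last by rewrite ffunE /= ltnn.
  apply/ffunP => i; rewrite !ffunE /= ltn_ord; congr (t _); apply: val_inj.
  by rewrite /= inordK // ltnS ltnW.
apply/ffunP => i; rewrite !ffunE /=.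
case: ifP => hi.
  congr (t _); apply: val_inj; by rewrite /= inordK.
congr (t _); apply: val_inj => /=.
by apply/eqP; rewrite eqn_leq leqNgt hi /= -ltnS ltn_ord.
Qed.

Lemma sum_paths_base (G : {ffun 'I_1 -> S} -> R) :
  \sum_(t : {ffun 'I_1 -> S}) G t = \sum_(x : S) G [ffun => x].
Proof.
rewrite (reindex (fun x : S => [ffun => x])) //.
exists (fun t : {ffun 'I_1 -> S} => t ord0) => [x|t] _; first by rewrite ffunE.
by apply/ffunP => i; rewrite !ffunE (ord1 i).
Qed.

Variables (pi : S -> R) (P : S -> S -> R).

Lemma pp_step n (t : {ffun 'I_n.+2 -> S}) :
  path_prob pi P t = path_prob pi P (restr t) * P (restr t ord_max) (t ord_max).
Proof.
rewrite /path_prob big_ord_recr /= -mulrA; congr (_ * (_ * _)).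
- by rewrite ffunE; congr (pi (t _)); apply: val_inj.
- apply: eq_bigr => i _; rewrite !ffunE; congr (P (t _) (t _)); exact: val_inj.
- rewrite ffunE; congr (P (t _) (t _)); exact: val_inj.
Qed.

Lemma ps_step (f : S -> R) n (t : {ffun 'I_n.+2 -> S}) :
  path_sum f t = path_sum f (restr t) + f (t ord_max).
Proof.
rewrite /path_sum big_ord_recr /=; congr (_ + _).
apply: eq_bigr => i _; rewrite ffunE; congr (f (t _)); exact: val_inj.
Qed.

End Paths.

Definition app (R : realType) (S : finType) (P : S -> S -> R) (u : S -> R) :=
  fun x => \sum_y P x y * u y.
Definition dot (R : realType) (S : finType) (pi : S -> R) (u v : S -> R) :=
  \sum_x pi x * u x * v x.
Definition EE (R : realType) (S : finType) (pi : S -> R) (P : S -> S -> R) n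
  (F : {ffun 'I_n.+1 -> S} -> R) := \sum_t path_prob pi P t * F t.

Section Chain.
Variables (R : realType) (S : finType) (pi : S -> R) (P : S -> S -> R).
Hypotheses (Pge0 : forall x y, 0 <= P x y) (Prow : forall x, \sum_y P x y = 1)
  (Prev : reversible pi P).

Local Notation app := (app P).
Local Notation dot := (dot pi).
Local Notation E := (EE pi P).

Lemma stat y : \sum_x pi x * P x y = pi y.
Proof.
under eq_bigr do rewrite Prev.
by rewrite -big_distrr /= Prow mulr1.
Qed.

Lemma dot_app u v : dot (app u) v = dot u (app v).
Proof.
rewrite /dot /app.
transitivity (\sum_x \sum_y pi x * P x y * u y * v x).
  apply: eq_bigr => x _; rewrite big_distrr big_distrl /=.
  by apply: eq_bigr => y _ /=; ring.
rewrite exchange_big /=; apply: eq_bigr => y _.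
rewrite big_distrr /=; apply: eq_bigr => x _.
rewrite Prev; ring.
Qed.

Lemma sum_app u : \sum_x pi x * app u x = \sum_x pi x * u x.
Proof.
rewrite /app /=.
transitivity (\sum_x \sum_y pi x * P x y * u y).
  by apply: eq_bigr => x _; rewrite big_distrr; apply: eq_bigr => y _ /=; rewrite mulrA.
rewrite exchange_big /=; apply: eq_bigr => y _.
by rewrite -big_distrl /= stat.
Qed.

Lemma app_ext u v x : (forall y, u y = v y) -> app u x = app v x.
Proof. by move=> h; apply: eq_bigr => y _; rewrite h. Qed.

Lemma appD u v x : app (fun y => u y + v y) x = app u x + app v x.
Proof. by rewrite /app -big_split; apply: eq_bigr => y _ /=; ring. Qed.

Lemma appB u v x : app (fun y => u y - v y) x = app u x - app v x.
Proof.
rewrite /app /= -sumrB; apply: eq_bigr => y _ /=. ring.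
Qed.

Lemma appc c x : app (fun _ => c) x = c.
Proof. by rewrite /app -big_distrl /= Prow mul1r. Qed.

Lemma dot_ext u v u' v' : (forall x, u x = u' x) -> (forall x, v x = v' x) ->
  dot u v = dot u' v'.
Proof. by move=> h1 h2; apply: eq_bigr => x _; rewrite h1 h2. Qed.

Lemma dotC u v : dot u v = dot v u.
Proof. by apply: eq_bigr => x _ /=; ring. Qed.

Lemma dotDl u v w : dot (fun x => u x + v x) w = dot u w + dot v w.
Proof. by rewrite /dot -big_split; apply: eq_bigr => x _ /=; ring. Qed.

Lemma dotBl u v w : dot (fun x => u x - v x) w = dot u w - dot v w.
Proof. by rewrite /dot -sumrB; apply: eq_bigr => x _ /=; ring. Qed.

Lemma dotDr u v w : dot w (fun x => u x + v x) = dot w u + dot w v.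
Proof. by rewrite dotC dotDl dotC [dot v w]dotC. Qed.

Lemma dotBr u v w : dot w (fun x => u x - v x) = dot w u - dot w v.
Proof. by rewrite dotC dotBl dotC [dot v w]dotC. Qed.

Lemma E_ext n (F G : {ffun 'I_n.+1 -> S} -> R) : (forall t, F t = G t) -> E F = E G.
Proof. by move=> h; apply: eq_bigr => t _; rewrite h. Qed.

Lemma E_add n (F G : {ffun 'I_n.+1 -> S} -> R) :
  E (fun t => F t + G t) = E F + E G.
Proof. by rewrite /EE -big_split; apply: eq_bigr => t _ /=; ring. Qed.

Lemma E_scal n c (F : {ffun 'I_n.+1 -> S} -> R) :
  E (fun t => c * F t) = c * E F.
Proof. by rewrite /EE big_distrr; apply: eq_bigr => t _ /=; ring. Qed.

Lemma E_step n (G : {ffun 'I_n.+1 -> S} -> S -> R) :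
  E (fun t : {ffun 'I_n.+2 -> S} => G (restr t) (t ord_max)) =
  E (fun t => \sum_y P (t ord_max) y * G t y).
Proof.
rewrite /EE.
pose G' := fun t' y => path_prob pi P t' * P (t' ord_max) y * G t' y.
transitivity (\sum_(t : {ffun 'I_n.+2 -> S}) G' (restr t) (t ord_max)).
  apply: eq_bigr => t _; rewrite /G' pp_step.
  by congr (_ * P _ _ * _); rewrite ffunE; congr (t _); apply: val_inj.
rewrite sum_paths_step; apply: eq_bigr => t _.
by rewrite big_distrr; apply: eq_bigr => y _ /=; rewrite mulrA.
Qed.

Lemma E_base (F : {ffun 'I_1 -> S} -> R) : E F = \sum_x pi x * F [ffun => x].
Proof.
rewrite /EE sum_paths_base; apply: eq_bigr => x _.
by rewrite /path_prob big_ord0 mulr1 ffunE.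
Qed.

Lemma E_marg n (phi : S -> R) : E (fun t : {ffun 'I_n.+1 -> S} => phi (t ord_max)) =
  \sum_x pi x * phi x.
Proof.
elim: n phi => [|n IH] phi.
  by rewrite E_base; apply: eq_bigr => x _; rewrite ffunE.
rewrite (@E_step n (fun _ y => phi y)).
by rewrite (IH (app phi)) sum_app.
Qed.

Fixpoint useq (g : S -> R) n : S -> R :=
  match n with O => g | m.+1 => fun x => g x + app (useq g m) x end.

Lemma E_mean (f : S -> R) n : E (fun t : {ffun 'I_n.+1 -> S} => path_sum f t) =
  n.+1%:R * \sum_x pi x * f x.
Proof.
elim: n => [|n IH].
  rewrite E_base mul1r; apply: eq_bigr => x _.
  by rewrite /path_sum big_ord1 ffunE.
rewrite (@E_ext _ _ (fun t => path_sum f (restr t) + f (t ord_max))); last first.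
  by move=> t; rewrite ps_step.
rewrite (@E_step n (fun t' y => path_sum f t' + f y)).
rewrite (@E_ext _ _ (fun t => path_sum f t + app f (t ord_max))); last first.
  move=> t; rewrite /app; under eq_bigr do rewrite mulrDr.
  by rewrite big_split /= -big_distrl /= Prow mul1r.
rewrite E_add IH (@E_marg n (app f)) sum_app.
rewrite -[n.+2]addn1 natrD; ring.
Qed.

Lemma E_W g n phi : E (fun t : {ffun 'I_n.+1 -> S} => path_sum g t * phi (t ord_max))
  = dot (useq g n) phi.
Proof.
elim: n phi => [|n IH] phi.
  rewrite E_base /dot; apply: eq_bigr => x _.
  by rewrite /path_sum big_ord1 !ffunE /=; ring.
rewrite (@E_ext _ _ (fun t => (path_sum g (restr t) + g (t ord_max)) * phi (t ord_max)));
  last by move=> t; rewrite ps_step.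
rewrite (@E_step n (fun t' y => (path_sum g t' + g y) * phi y)).
rewrite (@E_ext _ _ (fun t => path_sum g t * app phi (t ord_max) +
    app (fun y => g y * phi y) (t ord_max))); last first.
  move=> t; rewrite /app.
  transitivity (\sum_y (path_sum g t * (P (t ord_max) y * phi y) +
      P (t ord_max) y * (g y * phi y))).
    by apply: eq_bigr => y _; ring.
  by rewrite big_split /= -big_distrr.
rewrite E_add IH (@E_marg n (app (fun y => g y * phi y))) sum_app /=.
rewrite dotDl -dot_app addrC; congr (_ + _).
by apply: eq_bigr => x _; rewrite mulrA.
Qed.

Lemma E_sq g n : E (fun t : {ffun 'I_n.+2 -> S} => path_sum g t ^+ 2) =
  E (fun t : {ffun 'I_n.+1 -> S} => path_sum g t ^+ 2) + 2 * dot (useq g n) (app g)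
  + dot g g.
Proof.
rewrite (@E_ext _ _ (fun t => (path_sum g (restr t) + g (t ord_max)) ^+ 2));
  last by move=> t; rewrite ps_step.
rewrite (@E_step n (fun t' y => (path_sum g t' + g y) ^+ 2)).
rewrite (@E_ext _ _ (fun t => path_sum g t ^+ 2 + 2 * (path_sum g t * app g (t ord_max)) +
    app (fun y => g y ^+ 2) (t ord_max))); last first.
  move=> t; rewrite /app.
  transitivity (\sum_y (path_sum g t ^+ 2 * P (t ord_max) y +
      2 * (path_sum g t * (P (t ord_max) y * g y)) + P (t ord_max) y * g y ^+ 2)).
    by apply: eq_bigr => y _; ring.
  rewrite big_split big_split /= -big_distrr -big_distrr -big_distrr /= Prow mulr1.
  by [].
rewrite !E_add E_scal E_W (@E_marg n (app (fun y => g y ^+ 2))) sum_app.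
congr (_ + _); apply: eq_bigr => x _; ring.
Qed.

End Chain.

Fixpoint Pk (R : realType) (S : finType) (P : S -> S -> R) k (u : S -> R) : S -> R :=
  match k with O => u | k'.+1 => app P (Pk P k' u) end.

Section Asym.
Variables (R : realType) (S : finType) (pi : S -> R) (P : S -> S -> R).
Hypotheses (Pge0 : forall x y, 0 <= P x y) (Prow : forall x, \sum_y P x y = 1)
  (Prev : reversible pi P) (pige0 : forall x, 0 <= pi x).
Variable h : S -> R.

Local Notation app := (app P).
Local Notation dot := (dot pi).
Local Notation E := (EE pi P).
Local Notation Pk := (Pk P).

Let g := fun x => h x - app h x.
Let e k := dot (Pk k h) h.

Lemma useq_eq n x : useq P g n x = h x - Pk n.+1 h x.
Proof.
elim: n x => [|n IH] x //=.
rewrite (app_ext P x IH) appB /g; ring.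
Qed.

Lemma dot_useq n : dot (useq P g n) (app g) = dot (app h) g - e n.+2 + e n.+3.
Proof.
rewrite -(dot_app Prev).
have -> : dot (app (useq P g n)) g = dot (fun x => app h x - Pk n.+2 h x) g.
  by apply: dot_ext => x //; rewrite (app_ext P x (useq_eq n)) appB.
rewrite dotBl.
have -> : dot (Pk n.+2 h) g = e n.+2 - e n.+3.
  by rewrite /g dotBr /e -(dot_app Prev).
ring.
Qed.

Let a n := E (fun t : {ffun 'I_n.+1 -> S} => path_sum g t ^+ 2).
Let c := dot g g + 2 * dot (app h) g.
Let K := a 0 - c - 2 * e 2.

Lemma a_closed n : a n = n.+1%:R * c + K + 2 * e n.+2.
Proof.
elim: n => [|n IH]; first by rewrite /K; ring.
rewrite /a (E_sq Prow Prev) -/(a n) IH dot_useq -[n.+2]addn1 natrD /c; ring.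
Qed.

Let M := \sum_y `|h y|.

Lemma Pk_bound k x : `|Pk k h x| <= M.
Proof.
elim: k x => [|k IH] x /=.
  by rewrite /M (bigD1 x) //= lerDl sumr_ge0.
apply: le_trans (ler_norm_sum _ _ _) _.
apply: le_trans (_ : \sum_y P x y * M <= M).
  apply: ler_sum => y _; rewrite normrM ger0_norm //.
  by apply: ler_wpM2l.
by rewrite -big_distrl /= Prow mul1r.
Qed.

Let B := \sum_x pi x * M * `|h x|.

Lemma e_bound k : `|e k| <= B.
Proof.
rewrite /e /dot.
apply: le_trans (ler_norm_sum _ _ _) _.
apply: ler_sum => x _; rewrite !normrM ger0_norm //.
by apply: ler_wpM2r => //; apply: ler_wpM2l => //; apply: Pk_bound.
Qed.

Lemma asym_formula : asym_var pi g P = 2 * dot h g - dot g g.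
Proof.
have gm : \sum_x pi x * g x = 0.
  rewrite /g; under eq_bigr do rewrite mulrBr.
  by rewrite sumrB (sum_app Prow Prev) subrr.
have hv n : var_sum pi P g n = a n.
  have hm : mean_sum pi P g n = 0.
    by have := E_mean Prow Prev g n; rewrite /EE /mean_sum => ->; rewrite gm mulr0.
  by rewrite /var_sum hm /a /EE; apply: eq_bigr => t _; rewrite subr0.
set C := `|K| + 2 * B.
have Hw : ((fun n => (K + 2 * e n.+2) * harmonic n) x @[x --> \oo] --> 0)%classic.
  apply: (squeeze_cvgr (f := fun n => - (C * harmonic n)) (h := fun n => C * harmonic n)).
  - apply: nearW => n /=.
    have hn : 0 <= (n.+1%:R : R)^-1 by rewrite invr_ge0.
    have hb : `|K + 2 * e n.+2| <= C.
      apply: le_trans (ler_normD _ _) _; rewrite /C lerD2l normrM ger0_norm //.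
      by rewrite ler_pM2l // e_bound.
    move: hb; rewrite ler_norml => /andP [h1 h2].
    by rewrite -mulNr !ler_wpM2r.
  - rewrite -oppr0 -(mulr0 C); apply: cvgN; apply: cvgMl_tmp; exact: cvg_harmonic.
  - rewrite -(mulr0 C); apply: cvgMl_tmp; exact: cvg_harmonic.
have Hcv : ((fun n => var_sum pi P g n / n.+1%:R) x @[x --> \oo] --> c)%classic.
  have -> : (fun n => var_sum pi P g n / n.+1%:R) =
            (fun n => c + (K + 2 * e n.+2) * harmonic n).
    apply: funext => n; rewrite hv a_closed /=.
    by field; rewrite addrC natr1 pnatr_eq0.
  have H2 := cvgD (cvg_cst c) Hw; rewrite addr0 in H2; exact: H2.
rewrite /asym_var (cvg_lim (@Rhausdorff R) Hcv) /c.
have -> : dot (app h) g = dot h g - dot g g.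
  rewrite -dotBl; apply: dot_ext => x //; rewrite /g; ring.
ring.
Qed.

End Asym.

Section Exist.
Variables (R : realType) (S : finType) (pi : S -> R) (P : S -> S -> R).
Hypotheses (Pge0 : forall x y, 0 <= P x y) (Prow : forall x, \sum_y P x y = 1)
  (Prev : reversible pi P) (pipos : forall x, 0 < pi x)
  (pisum : \sum_x pi x = 1) (Pirr : irreducible P).

Local Notation app := (app P).

Lemma sum_delta (x : S) (F : S -> R) :
  \sum_y (if x == y then 1 else 0) * F y = F x.
Proof.
rewrite (bigD1 x) //= eqxx mul1r big1 ?addr0 // => y /negbTE.
by rewrite eq_sym => ->; rewrite mul0r.
Qed.

Lemma nstep_ge0 n x y : 0 <= nstep P n x y.
Proof.
elim: n x y => [|n IH] x y /=; first by case: (x == y).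
by apply: sumr_ge0 => z _; apply: mulr_ge0.
Qed.

Lemma nstep_harm d : (forall x, app d x = d x) ->
  forall n x, \sum_y nstep P n x y * d y = d x.
Proof.
move=> Hd; elim=> [|n IH] x /=; first exact: sum_delta.
transitivity (\sum_z nstep P n x z * app d z).
  under eq_bigr do rewrite big_distrl /=.
  rewrite exchange_big /=; apply: eq_bigr => z _.
  by rewrite /app big_distrr /=; apply: eq_bigr => y _; rewrite mulrA.
by under eq_bigr do rewrite Hd; rewrite IH.
Qed.

Lemma nstep_row n x : \sum_y nstep P n x y = 1.
Proof.
have := @nstep_harm (fun _ => 1) (fun x => appc Prow 1 x) n x.
by under eq_bigr do rewrite mulr1.
Qed.

Lemma harm_const d : (forall x, app d x = d x) -> forall x y, d y = d x.
Proof.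
move=> Hd x.
case: (@arg_maxP _ _ S x predT d isT) => m _ Hm.
suff H : forall y, d y = d m by move=> y; rewrite !H.
move=> y; have [n Hn] := Pirr m y.
have Hs : \sum_z nstep P n m z * (d m - d z) = 0.
  under eq_bigr do rewrite mulrBr.
  by rewrite sumrB (nstep_harm Hd n m) -big_distrl /= nstep_row mul1r subrr.
have := @psumr_eq0P _ _ predT (fun z => nstep P n m z * (d m - d z)) _ Hs y isT.
move=> H; have {H}H : nstep P n m y * (d m - d y) = 0.
  apply: H => z _; apply: mulr_ge0; first exact: nstep_ge0.
  by rewrite subr_ge0; apply: Hm.
move/eqP: H; rewrite mulf_eq0 (gt_eqF Hn) /= subr_eq0 => /eqP ->.
by [].
Qed.

Definition Lf (x y : S) : R := (if x == y then 1 else 0) - P x y + pi y.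

Lemma Ld x d : \sum_y Lf x y * d y = d x - app d x + \sum_y pi y * d y.
Proof.
rewrite /Lf.
under eq_bigr do rewrite mulrDl mulrBl.
by rewrite big_split sumrB /= sum_delta.
Qed.

Lemma inj_L d : (forall x, \sum_y Lf x y * d y = 0) -> forall x, d x = 0.
Proof.
move=> H.
have Hs : \sum_y pi y * d y = 0.
  have : \sum_x pi x * (\sum_y Lf x y * d y) = 0.
    by rewrite big1 // => x _; rewrite H mulr0.
  under eq_bigr do rewrite Ld mulrDr mulrBr.
  rewrite big_split sumrB /= (sum_app Prow Prev) subrr add0r.
  by rewrite -big_distrl /= pisum mul1r.
have Hh : forall x, app d x = d x.
  by move=> x; have := H x; rewrite Ld Hs addr0 => /eqP; rewrite subr_eq0 => /eqP.
move=> x.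
have := Hs; under eq_bigr do rewrite (harm_const Hh x).
by rewrite -big_distrl /= pisum mul1r.
Qed.

Lemma sum_enum (F : S -> R) : \sum_(y : S) F y = \sum_(i < #|S|) F (enum_val i).
Proof.
rewrite (reindex (fun i : 'I_#|S| => enum_val i)) //=.
by exists enum_rank => x _; rewrite ?enum_valK ?enum_rankK.
Qed.

Lemma exists_sol g : \sum_x pi x * g x = 0 ->
  exists h, (forall x, g x = h x - app h x) /\ \sum_x pi x * h x = 0.
Proof.
move=> gm.
pose A : 'M[R]_#|S| := \matrix_(i, j) Lf (enum_val j) (enum_val i).
have Aw : forall (w : 'rV[R]_#|S|) x,
    (w *m A) 0 (enum_rank x) = \sum_y Lf x y * w 0 (enum_rank y).
  move=> w x; rewrite mxE sum_enum; apply: eq_bigr => i _.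
  by rewrite mxE enum_rankK enum_valK mulrC.
have Au : A \in unitmx.
  rewrite -row_free_unit -kermx_eq0; apply/eqP/row_matrixP => i.
  rewrite row0; set w := row i (kermx A).
  have wA : w *m A = 0 by rewrite /w -row_mul mulmx_ker row0.
  have := @inj_L (fun y => w 0 (enum_rank y)).
  move=> /(_ _) H; apply/rowP => j; rewrite [in RHS]mxE; change (w 0 j = 0).
  have -> : w 0 j = w 0 (enum_rank (enum_val j)) by rewrite enum_valK.
  apply: H => x; by rewrite -Aw wA mxE.
pose gr : 'rV[R]_#|S| := \row_i g (enum_val i).
pose w := gr *m invmx A.
have wA : w *m A = gr by rewrite /w mulmxKV.
have Hh : forall x, \sum_y Lf x y * w 0 (enum_rank y) = g x.
  by move=> x; rewrite -Aw wA mxE enum_rankK.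
exists (fun y => w 0 (enum_rank y)).
have Hs : \sum_x pi x * w 0 (enum_rank x) = 0.
  have : \sum_x pi x * (\sum_y Lf x y * w 0 (enum_rank y)) = 0.
    by rewrite -[RHS]gm; under eq_bigr do rewrite Hh.
  under eq_bigr do rewrite Ld mulrDr mulrBr.
  rewrite big_split sumrB /= (sum_app Prow Prev) subrr add0r.
  by rewrite -big_distrl /= pisum mul1r.
split=> // x; rewrite -Hh Ld Hs addr0 //.
Qed.

End Exist.

Unset Implicit Arguments.

Theorem theorem3 (R : realType) (S : finType) (pi : S -> R)
    (hpi : is_pos_distr pi) :
  (forall P : S -> S -> R, admissible pi P -> eff_dominates pi P P) /\
  (forall P Q : S -> S -> R, admissible pi P -> admissible pi Q ->
     eff_dominates pi P Q -> eff_dominates pi Q P -> P = Q) /\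
  (forall P Q T : S -> S -> R, admissible pi P -> admissible pi Q ->
     admissible pi T ->
     eff_dominates pi P Q -> eff_dominates pi Q T -> eff_dominates pi P T).
Proof.
case: hpi => pipos pisum.
have pige0 x : 0 <= pi x by apply/ltW.
split; first by move=> P _ f; exact: lexx.
split; last first.
  by move=> P Q T _ _ _ hPQ hQT f; exact: le_trans (hPQ f) (hQT f).
move=> P Q [[P0 P1] [Pi Pr]] [[Q0 Q1] [Qi Qr]] dPQ dQP.
have Veq f : asym_var pi f P = asym_var pi f Q by apply/le_anti; rewrite dPQ dQP.
have formP g h : (forall x, g x = h x - app P h x) ->
    asym_var pi g P = 2 * dot pi h g - dot pi g g.
  move=> Hg; have -> : g = (fun x => h x - app P h x) by apply: funext.
  exact: asym_formula.
have formQ g h : (forall x, g x = h x - app Q h x) ->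
    asym_var pi g Q = 2 * dot pi h g - dot pi g g.
  move=> Hg; have -> : g = (fun x => h x - app Q h x) by apply: funext.
  exact: asym_formula.
have key : forall h2, \sum_x pi x * h2 x = 0 -> forall x, app P h2 x = app Q h2 x.
  move=> h2 h2m.
  pose g2 := fun x => h2 x - app P h2 x.
  have g2m : \sum_x pi x * g2 x = 0.
    by rewrite /g2; under eq_bigr do rewrite mulrBr; rewrite sumrB (sum_app P1 Pr) subrr.
  have [k2 [Hk2 k2m]] := exists_sol Q0 Q1 Qr pisum Qi g2m.
  pose d := fun x => h2 x - k2 x.
  have dm : \sum_x pi x * d x = 0.
    by rewrite /d; under eq_bigr do rewrite mulrBr; rewrite sumrB h2m k2m subrr.
  have [h1 [Hh1 _]] := exists_sol P0 P1 Pr pisum Pi dm.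
  have [k1 [Hk1 _]] := exists_sol Q0 Q1 Qr pisum Qi dm.
  have g2E : forall x, g2 x = h2 x - app P h2 x by [].
  have dE : forall x, d x = h2 x - k2 x by [].
  clearbody g2 d.
  have E1 := Veq d; rewrite (formP d h1 Hh1) (formQ d k1 Hk1) in E1.
  have E2 := Veq g2; rewrite (formP g2 h2 g2E) (formQ g2 k2 Hk2) in E2.
  have E3 := Veq (fun x => d x + g2 x).
  rewrite (formP _ (fun x => h1 x + h2 x)) in E3; last first.
    by move=> x; rewrite appD Hh1 g2E; ring.
  rewrite (formQ _ (fun x => k1 x + k2 x)) in E3; last first.
    by move=> x; rewrite appD Hk1 Hk2; ring.
  rewrite !dotDl !dotDr in E3.
  have S1 : dot pi h1 g2 = dot pi d h2.
    rewrite (@dot_ext _ _ pi h1 g2 h1 (fun x => h2 x - app P h2 x)) // dotBr -(dot_app Pr) -dotBl.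
    by apply: dot_ext => x //; rewrite Hh1.
  have S2 : dot pi k1 g2 = dot pi d k2.
    rewrite (@dot_ext _ _ pi k1 g2 k1 (fun x => k2 x - app Q k2 x)) //.
    rewrite dotBr -(dot_app Qr) -dotBl.
    by apply: dot_ext => x //; rewrite Hk1.
  have Hdd : dot pi d d = 0.
    have -> : dot pi d d = dot pi d h2 - dot pi d k2 by rewrite -dotBr; apply: dot_ext.
    rewrite [dot pi h2 d]dotC [dot pi k2 d]dotC in E3.
    lra.
  have d0 : forall x, d x = 0.
    move=> x.
    have := @psumr_eq0P _ _ predT (fun x => pi x * d x * d x) _ Hdd x isT.
    move=> /(_ _) H; have {H}/eqP : pi x * d x * d x = 0.
      by apply: H => z _; rewrite -mulrA mulr_ge0 // -expr2 sqr_ge0.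
    by rewrite -mulrA mulf_eq0 (gt_eqF (pipos x)) /= mulf_eq0 orbb => /eqP.
  move=> x.
  have -> : app P h2 x = h2 x - g2 x by rewrite g2E; ring.
  rewrite (app_ext Q x (v := k2)); last by move=> y; have := d0 y; rewrite dE => /eqP; rewrite subr_eq0 => /eqP.
  have := d0 x; rewrite dE Hk2 => /eqP; rewrite subr_eq0 => /eqP ->; ring.
apply: funext => x; apply: funext => y.
pose u := fun z : S => if y == z then (1 : R) else 0.
pose c := \sum_z pi z * u z.
have um : \sum_z pi z * (u z - c) = 0.
  under eq_bigr do rewrite mulrBr.
  by rewrite sumrB -big_distrl /= pisum mul1r subrr.
have HP : forall (T : S -> S -> R), (forall x, \sum_y T x y = 1) ->
    T x y = app T (fun z => u z - c) x + c.
  move=> T T1.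
  rewrite (appB T u (fun _ => c)) (appc T1) subrK.
  by rewrite /app; under eq_bigr do rewrite mulrC; rewrite sum_delta.
by rewrite (HP P P1) (HP Q Q1) (key _ um).
Qed.
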